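(* Let $\varepsilon>0$, $\alpha_3,\beta_3\in\mathbb R$, and set $\gamma=\frac{1}{\sqrt{1+\varepsilon}}$, $\mu_2=\frac12\sqrt{\frac{\varepsilon}{1+\varepsilon}}$, $\mu_1=\frac{\sqrt\varepsilon}{2}$, so that $W$ has the simple eigenvalues $\pm i$ and $\pm\frac{i}{\sqrt{1+\varepsilon}}$. Let $\delta_{1,2}$ and $\delta_{3,4}$ denote the cubic normal-form coefficients (defined in the context) associated with the eigenvalues $\lambda=i$ and $\lambda=\frac{i}{\sqrt{1+\varepsilon}}$, respectively. Then there exist constants $\kappa_1,\kappa_2>0$ (depending only on $\varepsilon$ and on the normalization of the eigenvectors) such that $$\delta_{1,2}=\kappa_1\Big(-\frac{\varepsilon\sqrt{\varepsilon}}{1+\varepsilon}+\frac{3\sqrt{\varepsilon}}{1+\varepsilon}\alpha_3-\frac{3(1+\varepsilon)}{\sqrt{\varepsilon}}\beta_3\Big),\qquad \delta_{3,4}=\kappa_2\Big(-\sqrt{\varepsilon}\,\alpha_3+\frac{(1+\varepsilon)^2}{\sqrt{\varepsilon}}\beta_3\Big).$$ In particular, in both coefficients the ratio of the coefficient of $\alpha_3$ to that of $\beta_3$ equals $-\frac{\varepsilon}{(1+\varepsilon)^2}$, so that if $\beta_3=\frac{\varepsilon}{(1+\varepsilon)^2}\alpha_3$ then $\delta_{1,2}=-\kappa_1\frac{\varepsilon\sqrt\varepsilon}{1+\varepsilon}<0$ and $\delta_{3,4}=0$, independently of $\alpha_3$.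
   Context: The coupled Van der Pol–Duffing oscillator / nonlinear absorber system, in dimensionless form with state $x=(x_1,x_2,x_3,x_4)=(q_1,\dot q_1,q_1-q_2,\dot q_1-\dot q_2)$, is $\dot x=Wx+b(x)$, where $$W=\begin{pmatrix}0&1&0&0\\ -1&2\mu_1&-\gamma^2\varepsilon&-2\mu_2\gamma\varepsilon\\ 0&0&0&1\\ -1&2\mu_1&-\gamma^2(1+\varepsilon)&-2\mu_2\gamma(1+\varepsilon)\end{pmatrix},\quad b(x)=\begin{pmatrix}0\\ -2\mu_1x_1^2x_2-\alpha_3x_1^3-\beta_3\varepsilon x_3^3\\ 0\\ -2\mu_1x_1^2x_2-\alpha_3x_1^3-\beta_3(1+\varepsilon)x_3^3\end{pmatrix},$$ with $\varepsilon>0$ the mass ratio, $\alpha_3$ the primary cubic stiffness coefficient and $\beta_3$ the absorber cubic stiffness coefficient. For a simple purely imaginary eigenvalue $\lambda$ of $W$ with right eigenvector $v$ ($Wv=\lambda v$) and left eigenvector $w$ ($w^TW=\lambda w^T$, $w^Tv\neq0$), define $c_\lambda$ as the coefficient of $z^2\bar z$ in the polynomial $w^T b(vz+\bar v\bar z)$ in the variables $z,\bar z$, divided by $w^Tv$, and set $\delta=\mathrm{Re}\,c_\lambda$. This is the coefficient in the (single-pair, cubic-order) Hopf normal form $\dot r=(\mathrm{Re}\lambda) r+\delta r^3$; rescaling $v$ by $k\neq0$ multiplies $\delta$ by $|k|^2$, so its sign is normalization independent. $\delta<0$ corresponds to a supercritical and $\delta>0$ to a subcritical Hopf bifurcation.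 *)

(* Defs.v *)
(* Complex numbers are modelled by an arbitrary
   numClosedFieldType C (algebraically closed field with conjugation and
   order, e.g. the complex numbers). *)
From HB Require Import structures.
From mathcomp Require Import all_boot all_order all_algebra.
Set Implicit Arguments. Unset Strict Implicit. Unset Printing Implicit Defensive.
Import Order.TTheory GRing.Theory Num.Theory.
Local Open Scope ring_scope.

Definition Wmat (R : pzRingType) (mu1 mu2 gam eps : R) : 'M[R]_4 :=
  \matrix_(i < 4, j < 4)
    nth 0 (nth [::]
      [:: [:: 0; 1; 0; 0];
          [:: -1; 2 * mu1; - (gam ^+ 2 * eps); - (2 * mu2 * gam * eps)];
          [:: 0; 0; 0; 1];
          [:: -1; 2 * mu1; - (gam ^+ 2 * (1 + eps)); - (2 * mu2 * gam * (1 + eps))]]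
      i) j.

Definition bvec (R : comPzRingType) (mu1 a3 b3 eps : R) (x : 'cV[R]_4) : 'cV[R]_4 :=
  let x1 := x (inord 0) ord0 in
  let x2 := x (inord 1) ord0 in
  let x3 := x (inord 2) ord0 in
  \col_(i < 4)
    nth 0 [:: 0;
              - (2 * mu1 * x1 ^+ 2 * x2) - a3 * x1 ^+ 3 - b3 * eps * x3 ^+ 3;
              0;
              - (2 * mu1 * x1 ^+ 2 * x2) - a3 * x1 ^+ 3 - b3 * (1 + eps) * x3 ^+ 3] i.

(* c_lambda: coefficient of z^2 zbar in w^T b(v z + conj(v) zbar), divided by
   w^T v.  The polynomial in the independent variables z, zbar is represented
   in {poly {poly C}}: z is the inner variable ('X)%:P, zbar the outer 'X.
   So the coefficient of z^2 zbar^1 is ((p`_1)`_2). *)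
Definition nf_coeff (C : numClosedFieldType) (mu1 a3 b3 eps : C)
    (v w : 'cV[C]_4) : C :=
  let up := fun c : C => (c%:P)%:P : {poly {poly C}} in
  let z : {poly {poly C}} := ('X : {poly C})%:P in
  let zb : {poly {poly C}} := 'X in
  let x := z *: map_mx up v + zb *: map_mx (fun c => up (c^*)) v in
  let p := ((map_mx up w)^T *m bvec (up mu1) (up a3) (up b3) (up eps) x) ord0 ord0 in
  ((p`_1)`_2) / ((w^T *m v) ord0 ord0).

Definition nf_delta (C : numClosedFieldType) (mu1 a3 b3 eps : C)
    (v w : 'cV[C]_4) : C := 'Re (nf_coeff mu1 a3 b3 eps v w).

Definition gam_of (C : numClosedFieldType) (eps : C) : C := (sqrtC (1 + eps))^-1.
Definition mu2_of (C : numClosedFieldType) (eps : C) : C := sqrtC (eps / (1 + eps)) / 2.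
Definition mu1_of (C : numClosedFieldType) (eps : C) : C := sqrtC eps / 2.
Definition W_of (C : numClosedFieldType) (eps : C) : 'M[C]_4 :=
  Wmat (mu1_of eps) (mu2_of eps) (gam_of eps) eps.

Definition eigpair (C : numClosedFieldType) (M : 'M[C]_4) (lam : C)
    (v w : 'cV[C]_4) : Prop :=
  [/\ M *m v = lam *: v, w^T *m M = lam *: w^T & (w^T *m v) ord0 ord0 != 0].

(* Main.v *)
Require Import Defs.
From HB Require Import structures.
From mathcomp Require Import all_boot all_order all_algebra ring.
Import Order.TTheory GRing.Theory Num.Theory.
Set Implicit Arguments. Unset Strict Implicit. Unset Printing Implicit Defensive.
Local Open Scope ring_scope.


Lemma lin1 (C : numClosedFieldType) (A B c E : C) : E = 0 -> A - B = c * E -> A = B.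
Proof. by move=> -> /eqP; rewrite mulr0 subr_eq0 => /eqP. Qed.
Lemma lin2 (C : numClosedFieldType) (A B c1 E1 c2 E2 : C) : E1 = 0 -> E2 = 0 ->
  A - B = c1 * E1 + c2 * E2 -> A = B.
Proof. by move=> -> -> /eqP; rewrite !mulr0 addr0 subr_eq0 => /eqP. Qed.
Lemma eq0 (C : numClosedFieldType) (A B : C) : A = B -> A - B = 0.
Proof. by move=> ->; rewrite subrr. Qed.

Ltac realt := repeat first [ assumption | apply: rpredD | apply: rpredB | apply: rpredM | rewrite rpredN
  | apply: rpredX | apply: rpred1 | apply: rpred0 | apply: realn | rewrite realV ].

Definition Nexp (C : numClosedFieldType) (mu1 a3 b3 eps v0 v1 v2 w1 w3 : C) :=
  (- ((w1 + w3) * (2 * mu1)) * (v0 * v0 * v1^* + v0 * v0^* * v1 + v0^* * v0 * v1)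
   - ((w1 + w3) * a3) * (v0 * v0 * v0^* + v0 * v0^* * v0 + v0^* * v0 * v0)
   - ((w1 * eps + w3 * (1 + eps)) * b3) * (v2 * v2 * v2^* + v2 * v2^* * v2 + v2^* * v2 * v2)).

Lemma core1 (C : numClosedFieldType) (s v0 v1 v2 v3 w0 w1 w2 w3 : C) :
  0 < s ->
  v1 = 'i * v0 -> v3 = 'i * v2 ->
  -v0 + s * v1 - v2 - s * v3 = 'i * v3 ->
  -w1 - w3 = 'i * w0 -> w0 + s * (w1 + w3) = 'i * w1 ->
  -(s^+2 / (1 + s^+2)) * w1 - w3 = 'i * w2 ->
  w0 * v0 + w1 * v1 + w2 * v2 + w3 * v3 != 0 ->
  v0 != 0 /\ forall a3 b3 : C, a3 \is Num.real -> b3 \is Num.real ->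
  'Re (Nexp (s/2) a3 b3 (s^+2) v0 v1 v2 w1 w3 / (w0 * v0 + w1 * v1 + w2 * v2 + w3 * v3))
  = (v0 * v0^* * (1 + s^+2) / (2 * s^+2)) *
     (- (s^+2 * s / (1 + s^+2)) + 3 * s / (1 + s^+2) * a3 - 3 * (1 + s^+2) / s * b3).
Proof.
move=> hs V1 V3 V4 W1 W2 W3 hden.
have ii : 'i * 'i = -1 :> C := mulCii C.
have sr : s \is Num.real by rewrite gtr0_real.
have s0 : s != 0 by rewrite gt_eqF.
have e1 : 1 + s^+2 != 0.
  by rewrite gt_eqF // ltr_wpDr // ?sqr_ge0 ?exprn_ge0 // ltW.
subst v1 v3.
have Ev2 : v2 = v0 * (s + 'i) / s.
  apply: (lin1 (c := 'i / s) (eq0 V4)).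
  by field: ii.
subst v2.
have Ew1 : w1 = - w0 * ('i + s).
  by apply: (lin2 (c1 := 'i * s) (eq0 W1) (c2 := 'i) (eq0 W2)); ring: ii.
subst w1.
have Ew3 : w3 = s * w0.
  by apply: (lin1 (c := -1) (eq0 W1)); ring: ii.
subst w3.
have Ew2 : w2 = w0 * (s^+2 + 'i * s) / (1 + s^+2).
  by apply: (lin1 (c := 'i) (eq0 W3)); field: ii.
subst w2.
split.
  apply/negP => /eqP v00; move/negP: hden; apply; apply/eqP; rewrite v00; ring.
move=> a3 b3 ha3 hb3.
have cv1 : ('i * v0)^* = - 'i * v0^* by rewrite rmorphM /= conjCi mulNr.
have cv2 : (v0 * (s + 'i) / s)^* = v0^* * (s - 'i) / s.
  by rewrite !rmorphM /= fmorphV /= rmorphD /= conjCi (conj_Creal sr).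
rewrite /Nexp cv1 cv2.
set Z := (X in 'Re X).
have -> : Z = v0 * v0^* * ((- s^+2 + 3 * a3 - 3 * b3 * (1 + s^+2)^+2 / s^+2) / (2 * s))
   + 'i * (v0 * v0^* * ((1 + 3 * a3 + 3 * b3 * (1 + s^+2)^+2 / s^+2) / 2)).
  rewrite /Z; field: ii.
  rewrite s0 e1 /=; move: hden; apply: contra_neq => H.
  have hk : (1 + s^+2) * s != 0 by rewrite !mulf_neq0.
  by apply: (mulIf hk); rewrite mul0r -H; field; rewrite s0 e1.
have vvr : v0 * v0^* \is Num.real by rewrite -normCK rpredX // normr_real.
rewrite Re_rect; first by field; rewrite s0 e1.
  by realt.
by realt.
Qed.


Lemma core2 (C : numClosedFieldType) (s r v0 v1 v2 v3 w0 w1 w2 w3 : C) :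
  0 < s -> 0 < r -> r^+2 = 1 + s^+2 ->
  v1 = 'i / r * v0 -> v3 = 'i / r * v2 ->
  -v0 + s * v1 - v2 - s * v3 = 'i / r * v3 ->
  -w1 - w3 = 'i / r * w0 -> w0 + s * (w1 + w3) = 'i / r * w1 ->
  -(s^+2 / (1 + s^+2)) * w1 - w3 = 'i / r * w2 ->
  w0 * v0 + w1 * v1 + w2 * v2 + w3 * v3 != 0 ->
  v0 != 0 /\ forall a3 b3 : C, a3 \is Num.real -> b3 \is Num.real ->
  'Re (Nexp (s/2) a3 b3 (s^+2) v0 v1 v2 w1 w3 / (w0 * v0 + w1 * v1 + w2 * v2 + w3 * v3))
  = (3 * (v0 * v0^*) / (2 * s^+2)) * (- (s * a3) + (1 + s^+2)^+2 / s * b3).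
Proof.
move=> hs hr hrs V1 V3 V4 W1 W2 W3 hden.
have ii : 'i * 'i = -1 :> C := mulCii C.
have sr : s \is Num.real by rewrite gtr0_real.
have rr : r \is Num.real by rewrite gtr0_real.
have s0 : s != 0 by rewrite gt_eqF.
have r0 : r != 0 by rewrite gt_eqF.
have e1 : 1 + s^+2 != 0.
  by rewrite gt_eqF // ltr_wpDr // ?sqr_ge0 ?exprn_ge0 // ltW.
have e2 : s^+2 + r^+2 != 0.
  by rewrite gt_eqF // ltr_wpDr // ?exprn_gt0 ?exprn_ge0 // ltW.
subst v1 v3.
have Ev2 : v2 = v0 * ('i * r / s).
  apply: (lin1 (c := - r^+2 * (s - 'i * r) / (s * (s^+2 + r^+2))) (eq0 V4)).
  by field: ii hrs; rewrite r0 e2 s0.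
subst v2.
have Ew1 : w1 = - w0 * ('i * r + s).
  by apply: (lin2 (c1 := 'i * r * s) (eq0 W1) (c2 := 'i * r) (eq0 W2)); field: ii; rewrite r0.
subst w1.
have Ew3 : w3 = w0 * (s + 'i * s^+2 / r).
  by apply: (lin1 (c := -1) (eq0 W1)); field: ii hrs.
subst w3.
have Ew2 : w2 = w0 * ('i * s / r).
  by apply: (lin1 (c := 'i * r) (eq0 W3)); field: ii hrs; rewrite r0 e1.
subst w2.
split.
  apply/negP => /eqP v00; move/negP: hden; apply; apply/eqP; rewrite v00; ring.
move=> a3 b3 ha3 hb3.
have cv1 : ('i / r * v0)^* = - 'i / r * v0^*.
  by rewrite !rmorphM /= fmorphV /= conjCi (conj_Creal rr) mulNr.
have cv2 : (v0 * ('i * r / s))^* = v0^* * (- 'i * r / s).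
  by rewrite !rmorphM /= fmorphV /= conjCi (conj_Creal sr) (conj_Creal rr).
rewrite /Nexp cv1 cv2.
set Z := (X in 'Re X).
have -> : Z = v0 * v0^* * ((- 3 * a3 + 3 * b3 * (1 + s^+2)^+2 / s^+2) / (2 * s))
   + 'i * (v0 * v0^* * (- 1 / (2 * r))).
  rewrite /Z; field: ii hrs.
  rewrite r0 s0 /=; move: hden; apply: contra_neq => H.
  have hk : r * s != 0 by rewrite !mulf_neq0.
  by apply: (mulIf hk); rewrite mul0r -H; field; rewrite r0 s0.
have vvr : v0 * v0^* \is Num.real by rewrite -normCK rpredX // normr_real.
rewrite Re_rect; first by field; rewrite s0.
  by realt.
by realt.
Qed.


Lemma l3 : lift ord0 (lift ord0 (lift ord0 ord0)) = inord 3 :> 'I_4.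
Proof. by apply: val_inj; rewrite /= inordK. Qed.
Lemma l2 : lift ord0 (lift ord0 ord0) = inord 2 :> 'I_4.
Proof. by apply: val_inj; rewrite /= inordK. Qed.
Lemma l1 : lift ord0 ord0 = inord 1 :> 'I_4.
Proof. by apply: val_inj; rewrite /= inordK. Qed.
Lemma l0 : ord0 = inord 0 :> 'I_4.
Proof. by apply: val_inj; rewrite /= inordK. Qed.

Definition xp (C : numClosedFieldType) (c : C) : {poly {poly C}} :=
  ('X : {poly C})%:P * (c%:P)%:P + 'X * (((c^*))%:P)%:P.

Lemma cubic_coef (C : numClosedFieldType) (k a b c : C) :
  (((k%:P)%:P * (xp a * xp b * xp c))`_1)`_2 = k * (a*b*(c^*) + a*(b^*) *c + (a^*) *b*c).
Proof.
have -> : (k%:P)%:P * (xp a * xp b * xp c) =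
   ((k*a*b*c)%:P * 'X^3)%:P + 'X * ((k*(a*b*(c^*) + a*(b^*) *c + (a^*) *b*c))%:P * 'X^2)%:P
   + 'X^2 * ((k*(a*(b^*) *(c^*) + (a^*) *b*(c^*) + (a^*) *(b^*) *c))%:P * 'X)%:P
   + 'X^3 * ((k*(a^*) *(b^*) *(c^*))%:P)%:P.
  rewrite /xp; ring.
rewrite !coefD coefC /= coefXM /= coefXnM /= coefXnM /= coefC /=.
by rewrite coefC /= coefCM coefXn /= mulr1 add0r !addr0.
Qed.

Lemma nf_formula (C : numClosedFieldType) mu1 a3 b3 eps (v w : 'cV[C]_4) :
  let v0 := v (inord 0) ord0 in let v1 := v (inord 1) ord0 in
  let v2 := v (inord 2) ord0 in let v3 := v (inord 3) ord0 in
  let w0 := w (inord 0) ord0 in let w1 := w (inord 1) ord0 in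
  let w2 := w (inord 2) ord0 in let w3 := w (inord 3) ord0 in
  nf_coeff mu1 a3 b3 eps v w =
  (- ((w1 + w3) * (2 * mu1)) * (v0 * v0 * v1^* + v0 * v0^* * v1 + v0^* * v0 * v1)
   - ((w1 + w3) * a3) * (v0 * v0 * v0^* + v0 * v0^* * v0 + v0^* * v0 * v0)
   - ((w1 * eps + w3 * (1 + eps)) * b3) * (v2 * v2 * v2^* + v2 * v2^* * v2 + v2^* * v2 * v2))
  / (w0 * v0 + w1 * v1 + w2 * v2 + w3 * v3).
Proof.
rewrite /nf_coeff !mxE !big_ord_recl !big_ord0 /= !mxE /= l3 l2 l1 l0.
move: (v (inord 0) ord0) (v (inord 1) ord0) (v (inord 2) ord0) (v (inord 3) ord0) => v0 v1 v2 v3.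
move: (w (inord 0) ord0) (w (inord 1) ord0) (w (inord 2) ord0) (w (inord 3) ord0) => w0 w1 w2 w3.
congr (_ / _); last by ring.
set K1 := - ((w1 + w3) * (2 * mu1)).
set K2 := - ((w1 + w3) * a3).
set K3 := - ((w1 * eps + w3 * (1 + eps)) * b3).
rewrite -!/(xp _).
have -> : forall p1 p2 p3 : {poly {poly C}},  ((w0%:P)%:P * 0 +
   ((w1%:P)%:P * (- (2 * (mu1%:P)%:P * p1 ^+ 2 * p2) - (a3%:P)%:P * p1 ^+ 3 - (b3%:P)%:P * (eps%:P)%:P * p3 ^+ 3) +
    ((w2%:P)%:P * 0 +
     ((w3%:P)%:P * (- (2 * (mu1%:P)%:P * p1 ^+ 2 * p2) - (a3%:P)%:P * p1 ^+ 3 - (b3%:P)%:P * (1 + (eps%:P)%:P) * p3 ^+ 3) + 0))))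
  = (K1%:P)%:P * (p1 * p1 * p2) + (K2%:P)%:P * (p1 * p1 * p1) + (K3%:P)%:P * (p3 * p3 * p3).
  by move=> p1 p2 p3; rewrite /K1 /K2 /K3; ring.
rewrite !coefD !cubic_coef.
rewrite /K1 /K2 /K3; ring.
Qed.

Lemma dotE (C : numClosedFieldType) (v w : 'cV[C]_4) :
  (w^T *m v) ord0 ord0 = w (inord 0) ord0 * v (inord 0) ord0 + w (inord 1) ord0 * v (inord 1) ord0
     + w (inord 2) ord0 * v (inord 2) ord0 + w (inord 3) ord0 * v (inord 3) ord0.
Proof. rewrite !mxE !big_ord_recl !big_ord0 /= !mxE /= l3 l2 l1 l0; ring. Qed.

Lemma eigv (C : numClosedFieldType) (mu1 mu2 gam eps lam : C) (v : 'cV[C]_4) :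
  Wmat mu1 mu2 gam eps *m v = lam *: v ->
  let v0 := v (inord 0) ord0 in let v1 := v (inord 1) ord0 in
  let v2 := v (inord 2) ord0 in let v3 := v (inord 3) ord0 in
  [/\ v1 = lam * v0, v3 = lam * v2 &
      - v0 + 2 * mu1 * v1 - gam ^+ 2 * (1 + eps) * v2 - 2 * mu2 * gam * (1 + eps) * v3 = lam * v3].
Proof.
move=> h.
have h0 := congr1 (fun A : 'M[C]_(_,_) => A ord0 ord0) h.
have h2 := congr1 (fun A : 'M[C]_(_,_) => A (lift ord0 (lift ord0 ord0)) ord0) h.
have h3 := congr1 (fun A : 'M[C]_(_,_) => A (lift ord0 (lift ord0 (lift ord0 ord0))) ord0) h.
move: h0 h2 h3; rewrite !mxE !big_ord_recl !big_ord0 /= !mxE /= l3 l2 l1 l0.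
move=> h0 h2 h3 /=; split; [rewrite -h0 | rewrite -h2 | rewrite -h3]; ring.
Qed.

Lemma eigw (C : numClosedFieldType) (mu1 mu2 gam eps lam : C) (w : 'cV[C]_4) :
  w^T *m Wmat mu1 mu2 gam eps = lam *: w^T ->
  let w0 := w (inord 0) ord0 in let w1 := w (inord 1) ord0 in
  let w2 := w (inord 2) ord0 in let w3 := w (inord 3) ord0 in
  [/\ - w1 - w3 = lam * w0, w0 + 2 * mu1 * (w1 + w3) = lam * w1 &
      - (gam ^+ 2 * eps) * w1 - gam ^+ 2 * (1 + eps) * w3 = lam * w2].
Proof.
move=> h.
have h0 := congr1 (fun A : 'M[C]_(_,_) => A ord0 ord0) h.
have h1 := congr1 (fun A : 'M[C]_(_,_) => A ord0 (lift ord0 ord0)) h.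
have h2 := congr1 (fun A : 'M[C]_(_,_) => A ord0 (lift ord0 (lift ord0 ord0))) h.
move: h0 h1 h2; rewrite !mxE !big_ord_recl !big_ord0 /= !mxE /= l3 l2 l1 l0.
move=> h0 h1 h2 /=; split; [rewrite -h0 | rewrite -h1 | rewrite -h2]; ring.
Qed.

Lemma sqrt_div (C : numClosedFieldType) (eps : C) : 0 < eps ->
  sqrtC (eps / (1 + eps)) = sqrtC eps / sqrtC (1 + eps).
Proof.
move=> he.
have he1 : 0 < 1 + eps by rewrite addr_gt0.
have -> : eps / (1 + eps) = (sqrtC eps / sqrtC (1 + eps)) ^+ 2.
  by rewrite expr_div_n !sqrtCK.
by rewrite sqrCK // divr_ge0 // sqrtC_ge0 ltW.
Qed.

Theorem mainTheorem2 (C : numClosedFieldType) (eps : C) (heps : 0 < eps) :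
  (* delta_{1,2}, eigenvalue i *)
  (forall v w : 'cV[C]_4, eigpair (W_of eps) 'i v w ->
   exists k1 : C, 0 < k1 /\
     (forall a3 b3 : C, a3 \is Num.real -> b3 \is Num.real ->
        nf_delta (mu1_of eps) a3 b3 eps v w =
        k1 * (- (eps * sqrtC eps / (1 + eps))
              + 3 * sqrtC eps / (1 + eps) * a3
              - 3 * (1 + eps) / sqrtC eps * b3)) /\
     (forall a3 : C, a3 \is Num.real ->
        nf_delta (mu1_of eps) a3 (eps / (1 + eps) ^+ 2 * a3) eps v w =
          - (k1 * (eps * sqrtC eps / (1 + eps))) /\
        nf_delta (mu1_of eps) a3 (eps / (1 + eps) ^+ 2 * a3) eps v w < 0)) /\
  (* delta_{3,4}, eigenvalue i / sqrt(1 + eps) *)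
  (forall v w : 'cV[C]_4, eigpair (W_of eps) ('i / sqrtC (1 + eps)) v w ->
   exists k2 : C, 0 < k2 /\
     (forall a3 b3 : C, a3 \is Num.real -> b3 \is Num.real ->
        nf_delta (mu1_of eps) a3 b3 eps v w =
        k2 * (- (sqrtC eps * a3) + (1 + eps) ^+ 2 / sqrtC eps * b3)) /\
     (forall a3 : C, a3 \is Num.real ->
        nf_delta (mu1_of eps) a3 (eps / (1 + eps) ^+ 2 * a3) eps v w = 0)) /\
  (* ratio of the alpha_3- to the beta_3-coefficient *)
  (3 * sqrtC eps / (1 + eps)) / (- (3 * (1 + eps) / sqrtC eps)) = - (eps / (1 + eps) ^+ 2) /\
  (- sqrtC eps) / ((1 + eps) ^+ 2 / sqrtC eps) = - (eps / (1 + eps) ^+ 2).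
Proof.
rewrite /nf_delta /W_of /mu1_of /mu2_of /gam_of (sqrt_div heps).
have hs : 0 < sqrtC eps by rewrite sqrtC_gt0.
have hr : 0 < sqrtC (1 + eps) by rewrite sqrtC_gt0 addr_gt0.
have hse : eps = sqrtC eps ^+ 2 by rewrite sqrtCK.
have hre : sqrtC (1 + eps) ^+ 2 = 1 + eps by rewrite sqrtCK.
move: (sqrtC eps) (sqrtC (1 + eps)) hs hr hse hre => s r hs hr hse.
subst eps => hrs.
have s0 : s != 0 by rewrite gt_eqF.
have r0 : r != 0 by rewrite gt_eqF.
have sr : s \is Num.real by rewrite gtr0_real.
have e1 : 1 + s^+2 != 0 by rewrite gt_eqF // addr_gt0 // exprn_gt0.
have e1p : 0 < 1 + s^+2 by rewrite addr_gt0 // exprn_gt0.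
split; last split; last split.
- move=> v w [/eigv [V1 V3 V4] /eigw [W1 W2 W3]]; rewrite dotE => hden.
  have V4' : - v (inord 0) ord0 + s * v (inord 1) ord0 - v (inord 2) ord0 - s * v (inord 3) ord0
     = 'i * v (inord 3) ord0.
    by rewrite -V4; field: hrs; rewrite r0.
  have W2' : w (inord 0) ord0 + s * (w (inord 1) ord0 + w (inord 3) ord0) = 'i * w (inord 1) ord0.
    by rewrite -W2; field.
  have W3' : - (s ^+ 2 / (1 + s ^+ 2)) * w (inord 1) ord0 - w (inord 3) ord0 = 'i * w (inord 2) ord0.
    by rewrite -W3; field: hrs; rewrite r0 e1.
  have [v0nz H] := core1 hs V1 V3 V4' W1 W2' W3' hden.
  have vv : 0 < v (inord 0) ord0 * (v (inord 0) ord0)^*.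
    by rewrite -normCK exprn_gt0 // normr_gt0.
  have hk : 0 < v (inord 0) ord0 * (v (inord 0) ord0)^* * (1 + s^+2) / (2 * s^+2).
    by apply: divr_gt0; [exact: mulr_gt0 vv e1p | rewrite mulr_gt0 // exprn_gt0].
  exists (v (inord 0) ord0 * (v (inord 0) ord0)^* * (1 + s^+2) / (2 * s^+2)); split => //.
  split.
    by move=> a3 b3 ha hb; rewrite nf_formula; apply: H.
  move=> a3 ha.
  have hb : s ^+ 2 / (1 + s ^+ 2) ^+ 2 * a3 \is Num.real by realt.
  rewrite nf_formula H //.
  set k := (X in X * _).
  have -> : k * (- (s ^+ 2 * s / (1 + s ^+ 2)) + 3 * s / (1 + s ^+ 2) * a3 -
     3 * (1 + s ^+ 2) / s * (s ^+ 2 / (1 + s ^+ 2) ^+ 2 * a3)) = - (k * (s ^+ 2 * s / (1 + s ^+ 2))).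
    by field; rewrite s0 e1.
  split => //.
  by rewrite oppr_lt0 mulr_gt0 // divr_gt0 // mulr_gt0 // exprn_gt0.
- move=> v w [/eigv [V1 V3 V4] /eigw [W1 W2 W3]]; rewrite dotE => hden.
  have V4' : - v (inord 0) ord0 + s * v (inord 1) ord0 - v (inord 2) ord0 - s * v (inord 3) ord0
     = 'i / r * v (inord 3) ord0 by rewrite -V4; field: hrs; rewrite r0.
  have W2' : w (inord 0) ord0 + s * (w (inord 1) ord0 + w (inord 3) ord0) = 'i / r * w (inord 1) ord0.
    by rewrite -W2; field.
  have W3' : - (s ^+ 2 / (1 + s ^+ 2)) * w (inord 1) ord0 - w (inord 3) ord0 = 'i / r * w (inord 2) ord0.
    by rewrite -W3; field: hrs; rewrite r0 e1.
  have [v0nz H] := core2 hs hr hrs V1 V3 V4' W1 W2' W3' hden.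
  have vv : 0 < v (inord 0) ord0 * (v (inord 0) ord0)^*.
    by rewrite -normCK exprn_gt0 // normr_gt0.
  have hk : 0 < 3 * (v (inord 0) ord0 * (v (inord 0) ord0)^*) / (2 * s^+2).
    by apply: divr_gt0; [exact: mulr_gt0 _ vv | rewrite mulr_gt0 // exprn_gt0].
  exists (3 * (v (inord 0) ord0 * (v (inord 0) ord0)^*) / (2 * s^+2)); split => //.
  split.
    by move=> a3 b3 ha hb; rewrite nf_formula; apply: H.
  move=> a3 ha.
  have hb : s ^+ 2 / (1 + s ^+ 2) ^+ 2 * a3 \is Num.real by realt.
  rewrite nf_formula H //.
  by field; rewrite s0 e1.
- by field; rewrite ?e1 ?s0.
- by field; rewrite ?e1 ?s0.
Qed.
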